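(* For any $U\in(0,1]$, let $L=\sqrt{\frac{C}{C/U^2+(g(U)-1)/\epsilon^2}}$. Then $L\le\min\{\lambda^*,U\}$.
   Context: $\epsilon\in(0,1)$, $K\ge1$, $C>K$, $g:[0,1]\to[1,K]$ non-decreasing, $f(\lambda)=\frac{C}{\lambda^2}+\frac{g(\lambda)}{\epsilon^2}$, and $\lambda^*\in(0,1]$ a minimizer of $f$ over $[0,1]$. *)

(* Defs.v *)
From mathcomp Require Import all_boot all_order all_algebra.
From mathcomp Require Import reals.
Set Implicit Arguments. Unset Strict Implicit. Unset Printing Implicit Defensive.
Import Order.TTheory GRing.Theory Num.Theory.
Local Open Scope ring_scope.

Definition fobj (R : realType) (C eps : R) (g : R -> R) (lam : R) : R :=
  C / lam ^+ 2 + g lam / eps ^+ 2.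

(* Main.v *)
Require Import Defs.
From mathcomp Require Import all_boot all_order all_algebra.
From mathcomp Require Import reals.
Import Order.TTheory GRing.Theory Num.Theory.
Local Open Scope ring_scope.

Lemma sqrt_le_aux (R : realType) (C D x : R) :
  0 < D -> 0 < x -> C <= x ^+ 2 * D -> Num.sqrt (C / D) <= x.
Proof.
move=> hD hx h.
have -> : x = Num.sqrt (x ^+ 2) by rewrite sqrtr_sqr gtr0_norm.
apply: ler_wsqrtr; by rewrite ler_pdivrMr.
Qed.

Theorem lemmaB4 (R : realType) (eps K C : R) (g : R -> R) (lamstar : R)
  (heps : 0 < eps < 1) (hK : 1 <= K) (hCK : K < C)
  (hg : forall x : R, 0 <= x <= 1 -> 1 <= g x <= K)
  (hmono : forall x y : R, 0 <= x -> x <= y -> y <= 1 -> g x <= g y)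
  (hlam : 0 < lamstar <= 1)
  (hmin : forall x : R, 0 < x <= 1 -> fobj C eps g lamstar <= fobj C eps g x)
  (U : R) (hU : 0 < U <= 1) :
  Num.sqrt (C / (C / U ^+ 2 + (g U - 1) / eps ^+ 2)) <= Num.min lamstar U.
Proof.
case/andP: heps => e0 e1; case/andP: hlam => l0 l1; case/andP: hU => u0 u1.
have C0 : 0 < C by apply: le_lt_trans hCK; apply: le_trans hK.
have /andP[gU1 _] := hg U (introT andP (conj (ltW u0) u1)).
have /andP[gl1 _] := hg lamstar (introT andP (conj (ltW l0) l1)).
have e20 : 0 < eps ^+ 2 by apply: exprn_gt0.
have u20 : 0 < U ^+ 2 by apply: exprn_gt0.
have l20 : 0 < lamstar ^+ 2 by apply: exprn_gt0.
have hq : 0 <= (g U - 1) / eps ^+ 2 by apply: divr_ge0; [rewrite subr_ge0|apply: ltW].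
have hD : 0 < C / U ^+ 2 + (g U - 1) / eps ^+ 2.
  apply: (lt_le_trans (divr_gt0 C0 u20)); by rewrite lerDl.
rewrite le_min; apply/andP; split; apply: sqrt_le_aux => //.
- have := hmin U (introT andP (conj u0 u1)); rewrite /fobj => h.
  have h2 : C / lamstar ^+ 2 <= C / U ^+ 2 + (g U - 1) / eps ^+ 2.
    rewrite mulrBl addrA lerBrDr; apply: le_trans h.
    by rewrite lerD2l ler_pM2r // invr_gt0.
  by rewrite mulrC -ler_pdivrMr.
- rewrite mulrDr mulrCA divff ?mulr1; last by rewrite gt_eqF.
  by rewrite lerDl; apply: mulr_ge0 => //; apply: ltW.
Qed.
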